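(* There exist a compact set $\mathcal{X}\subseteq\mathbb{R}^n$, a set $\mathcal{X}_0\subseteq\mathcal{X}$, a map $f:\mathcal{X}\to\mathcal{X}$ and a set $\mathcal{X}_{INF}\subseteq\mathcal{X}$ such that for every $x_0\in\mathcal{X}_0$ the state sequence $x_{k+1}=f(x_k)$ satisfies $x_k\in\mathcal{X}_{INF}$ for infinitely many $k$, but there is no bounded function $\mathcal{T}:\mathcal{X}\times\mathcal{X}\to\mathbb{R}$ together with a constant $\xi>0$ satisfying: (i) $\mathcal{T}(x,f(x))\geq0$ for all $x\in\mathcal{X}$; (ii) for all $x,y\in\mathcal{X}$: if $\mathcal{T}(x,f(x))\geq 0$ and $\mathcal{T}(f(x),y)\geq0$, then $\mathcal{T}(x,y)\geq0$; (iii) for all $x_0\in\mathcal{X}_0$ and all $y\in\mathcal{X}\setminus\mathcal{X}_{INF}$: if $\mathcal{T}(x_0,y)\geq0$ and $\mathcal{T}(y,f(y))\geq 0$, then $\mathcal{T}(x_0,f(y))\geq\mathcal{T}(x_0,y)+\xi$.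
   Context: A discrete-time dynamical system $(\mathcal{X},\mathcal{X}_0,f)$ (a control system with a single input) has state sequences $\langle x_0,x_1,\ldots\rangle$ with $x_0\in\mathcal{X}_0$ and $x_{k+1}=f(x_k)$. Conditions (i)–(iii) with bounded $\mathcal{T}$ constitute a (control) closure certificate for recurrence of $\mathcal{X}_{INF}$ in the single-input case. *)

(* Defs.v *)
From HB Require Import structures.
From mathcomp Require Import all_boot all_order all_algebra.
From mathcomp Require Import all_classical all_reals all_analysis.
Set Implicit Arguments. Unset Strict Implicit. Unset Printing Implicit Defensive.
Import Order.TTheory GRing.Theory Num.Theory.
Local Open Scope classical_set_scope.
Local Open Scope ring_scope.

Definition state_seq {T : Type} (f : T -> T) (x0 : T) (k : nat) : T := iter k f x0.

Definition closure_certificate {R : realType} {n : nat}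
  (X X0 XINF : set 'rV[R]_n) (f : 'rV[R]_n -> 'rV[R]_n)
  (T : 'rV[R]_n -> 'rV[R]_n -> R) (xi : R) : Prop :=
  (exists M : R, forall x y, X x -> X y -> `|T x y| <= M) /\
  0 < xi /\
  (forall x, X x -> 0 <= T x (f x)) /\
  (forall x y, X x -> X y -> 0 <= T x (f x) -> 0 <= T (f x) y -> 0 <= T x y) /\
  (forall x0 y, X0 x0 -> X y -> ~ XINF y ->
     0 <= T x0 y -> 0 <= T y (f y) -> T x0 (f y) >= T x0 y + xi).

(* Main.v *)
Require Import Defs.
From HB Require Import structures.
From mathcomp Require Import all_boot all_order all_algebra.
From mathcomp Require Import all_classical all_reals all_analysis.
From mathcomp Require Import ring lra zify.
Import Order.TTheory GRing.Theory Num.Theory.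
Import numFieldNormedType.Exports.
Local Open Scope classical_set_scope.
Local Open Scope ring_scope.

Theorem lemma2 (R : realType) (n : nat) (hn : (0 < n)%N) :
  exists (X X0 XINF : set 'rV[R]_n) (f : 'rV[R]_n -> 'rV[R]_n),
    compact X /\ X0 `<=` X /\ XINF `<=` X /\
    (forall x, X x -> X (f x)) /\
    (forall x0, X0 x0 -> ~ finite_set [set k : nat | XINF (state_seq f x0 k)]) /\
    ~ (exists (T : 'rV[R]_n -> 'rV[R]_n -> R) (xi : R),
         closure_certificate X X0 XINF f T xi).
Proof.
pose v : 'rV[R]_n := const_mx 1.
pose j0 : 'I_n := Ordinal hn.
pose p (k : nat) : 'rV[R]_n := (k.+1%:R)^-1 *: v.
pose h (t : R) : R := if t <= 2^-1 then t / (1 - t) else 1.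
pose f (x : 'rV[R]_n) : 'rV[R]_n := h (x ord0 j0) *: v.
have coord : forall t, (t *: v) ord0 j0 = t.
  by move=> t; rewrite !mxE mulr1.
have fp : forall k, f (p k) = p k.-1.
  case=> [|k].
    rewrite /f /p coord /h /= invr1.
    have -> : ((1:R) <= 2^-1) = false.
      by apply/negbTE; rewrite -ltNge; lra.
    by [].
  rewrite /f /p coord /h /=.
  have a0 : 0 < k.+1%:R :> R by rewrite ltr0n.
  have -> : (k.+2%:R)^-1 <= 2^-1 :> R.
    by rewrite lef_pV2 ?posrE ?ltr0n // ler_nat.
  apply: (congr1 (fun t => t *: v)).
  rewrite -addn1 natrD.
  have : k.+1%:R != 0 :> R by rewrite lt0r_neq0.
  set a := k.+1%:R.
  move=> an0.
  have a10 : a + 1 != 0 by rewrite lt0r_neq0 //; lra.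
  field.
  have k0 : 0 <= k%:R :> R by [].
  by apply/andP; split; apply: lt0r_neq0; lra.
have coordp : forall k, p k ord0 j0 = (k.+1%:R)^-1 by move=> k; rewrite coord.
have pinj0 : forall k, p k = p 0 -> k = 0%N.
  move=> k /(congr1 (fun x : 'rV[R]_n => x ord0 j0)); rewrite !coordp invr1 => /eqP.
  by case: k => // k; rewrite invr_eq1 pnatr_eq1.
have orbit : forall m k, state_seq f (p m) k = p (m - k)%N.
  move=> m; elim=> [|k IH]; first by rewrite subn0.
  by rewrite /state_seq iterS -/(state_seq f (p m) k) IH fp subnS.
have hrange : forall t, 0 <= t <= 1 -> 0 <= h t <= 1.
  move=> t /andP[t0 t1]; rewrite /h; case: ifP => th; last by lra.
  have d0 : 0 < 1 - t by lra.
  by rewrite divr_ge0 ?ler_pdivrMr //=; lra.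
have prange : forall k : nat, (0:R) <= (k.+1%:R)^-1 <= (1:R).
  move=> k; apply/andP; split; first by rewrite invr_ge0 ler0n.
  rewrite invf_le1 ?ltr0n //.
  by rewrite ler1n.
pose X := [set t *: v | t in `[(0:R), 1]].
have Xp : forall k, X (p k).
  move=> k; exists (k.+1%:R^-1) => //.
  by rewrite /= in_itv /= prange.
exists X, (range p), [set p 0%N], f.
split.
  apply: continuous_compact; last exact: segment_compact.
  apply: continuous_subspaceT; exact: scalel_continuous.
split; first by move=> _ [k _ <-].
split; first by move=> _ ->.
split.
  move=> _ [t /= ht <-]; exists (h t); last by rewrite /f coord.
  by move: ht; rewrite /= !in_itv /= => /hrange.
split.
  move=> _ [m _ <-] fin.
  apply: infinite_nat.
  have -> : [set: nat] = `I_m `|` [set k | (m <= k)%N].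
    apply/seteqP; split => k //= _.
    by case: (ltnP k m) => hk; [left|right].
  rewrite finite_setU; split; first exact: finite_II.
  apply: sub_finite_set fin => k /= mk.
  by rewrite orbit; have -> : (m - k = 0)%N by apply/eqP; rewrite subn_eq0.
move=> [T [xi [[M HM] [xi0 [Hi [Hii Hiii]]]]]].
have A : forall d j, (d < j)%N -> 0 <= T (p j) (p (j - d.+1)%N).
  elim=> [|d IH] j dj.
    by rewrite subn1 -fp; apply: Hi.
  have := Hii (p j) (p (j - d.+2)%N) (Xp _) (Xp _) (Hi _ (Xp _)).
  rewrite fp; apply.
  have e : (j.-1 - d.+1 = j - d.+2)%N by lia.
  rewrite -e; apply: IH; lia.
have M0 : 0 <= M by apply: le_trans (HM _ _ (Xp 0%N) (Xp 0%N)).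
pose N := Num.Def.archi_bound (M / xi).
have HN : M / xi < N%:R by apply: archi_boundP; rewrite divr_ge0 // ltW.
have B : forall i, (i <= N)%N -> i%:R * xi <= T (p N.+1) (p (N - i)%N).
  elim=> [|i IH] iN.
    rewrite mul0r subn0; have := A 0%N N.+1 isT; by rewrite subSS subn0.
  have y1 : (N - i)%N <> 0%N by lia.
  have Ay : 0 <= T (p N.+1) (p (N - i)%N).
    have := A i N.+1; rewrite subSS; apply; lia.
  have := Hiii (p N.+1) (p (N - i)%N) (ex_intro2 _ _ N.+1 I erefl) (Xp _)
    (fun E => y1 (pinj0 _ E)) Ay (Hi _ (Xp _)).
  rewrite fp subnS.
  have := IH (ltnW iN); rewrite -natr1 mulrDl mul1r; lra.
have := B N (leqnn N); rewrite subnn.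
have := HM (p N.+1) (p 0%N) (Xp _) (Xp _).
move: HN; rewrite ltr_pdivrMr // => HN.
have := ler_norm (T (p N.+1) (p 0%N)).
lra.
Qed.
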